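(* Let $P$ be a finite set of points in $\mathbb{R}^2$ with transmission radii $r(p)>0$, and let $t\in\mathbb{R}^2$. Let $\Gamma_1(t),\ldots,\Gamma_6(t)$ be the six canonical cones of $t$. For $i=1,\ldots,6$, let $Q_i(t)$ be the set of points $p\in P$ with $|pt|\le r(p)$ that are assigned to $\Gamma_i(t)$ (each such point lies in some cone; a point on a boundary between cones is assigned to one of them arbitrarily), and if $Q_i(t)\ne\emptyset$ let $q_i(t)$ be a point of $Q_i(t)$ of minimum transmission radius. Let $Q(t)$ be the set of (at most six) points $q_i(t)$ so obtained. Let $s\in P$ be a point that can reach $t$, and let $d^*(s,t):=\min_{q\in Q(t)}d_{\mathrm{hop}}(s,q)+1$. Then $d_{\mathrm{hop}}(s,t)\le d^*(s,t)\le d_{\mathrm{hop}}(s,t)+1$.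
   Context: The transmission graph $\mathcal{G}_{\mathrm{tr}}(P)$ is the directed graph on $P$ with arc $(p,q)$ iff $|pq|\le r(p)$. For $p,q\in P$, $d_{\mathrm{hop}}(p,q)$ is the minimum number of arcs on a directed path from $p$ to $q$ in $\mathcal{G}_{\mathrm{tr}}(P)$ ($0$ if $p=q$, $\infty$ if no path exists). For $s\in P$ and $t\in\mathbb{R}^2$, $d_{\mathrm{hop}}(s,t):=\min\{d_{\mathrm{hop}}(s,q)+1 : q\in P,\ |qt|\le r(q)\}$, and $s$ can reach $t$ if this is finite. The canonical cones of a point $x$ are the six closed $60$-degree cones with apex $x$ obtained by partitioning the plane around $x$ with a fixed orientation (the same six directions for every apex). *)

(* Defs.v *)
From HB Require Import structures.
From mathcomp Require Import all_boot all_order all_algebra.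
From mathcomp Require Import boolp reals.
Set Implicit Arguments. Unset Strict Implicit. Unset Printing Implicit Defensive.
Import Order.TTheory GRing.Theory Num.Theory.
Local Open Scope ring_scope.

Section Defs.
Variable R : realType.
Definition point := (R * R)%type.

Definition dist (p q : point) : R :=
  Num.sqrt ((p.1 - q.1) ^+ 2 + (p.2 - q.2) ^+ 2).

(* ---------- extended naturals: None = infinity ---------- *)
Definition ole (a b : option nat) : bool :=
  match b, a with
  | None, _ => true
  | Some _, None => false
  | Some n, Some m => (m <= n)%N
  end.
Definition omin (a b : option nat) : option nat :=
  match a, b with
  | None, _ => b
  | _, None => a
  | Some m, Some n => Some (minn m n)
  end.
Definition osucc (a : option nat) : option nat :=
  match a with Some n => Some n.+1 | None => None end.

Variables (P : seq point) (r : point -> R).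

Definition arc (p q : point) : bool :=
  [&& p \in P, q \in P & dist p q <= r p].

Definition walk (k : nat) (p q : point) : Prop :=
  exists s : seq point, [/\ p \in P, size s = k, path arc p s & last p s = q].

Lemma walk_ex_bool p q :
  (exists k, walk k p q) -> exists k, `[< walk k p q >].
Proof. by case=> k Hk; exists k; apply/asboolP. Qed.

Definition dhop (p q : point) : option nat :=
  match pselect (exists k, walk k p q) with
  | left H => Some (ex_minn (walk_ex_bool H))
  | right _ => None
  end.

Definition dhop_t (s t : point) : option nat :=
  \big[omin/None]_(q <- P | dist q t <= r q) osucc (dhop s q).

Definition can_reach (s t : point) : Prop := dhop_t s t <> None.

Definition rot60 (u : point) : point :=
  (u.1 / 2 - Num.sqrt 3 / 2 * u.2, Num.sqrt 3 / 2 * u.1 + u.2 / 2).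

Definition cone_dir (u0 : point) (k : nat) : point := iter k rot60 u0.

Definition in_cone (u0 : point) (i : 'I_6) (x y : point) : Prop :=
  exists a b : R, [/\ 0 <= a, 0 <= b,
    y.1 - x.1 = a * (cone_dir u0 i).1 + b * (cone_dir u0 i.+1).1 &
    y.2 - x.2 = a * (cone_dir u0 i).2 + b * (cone_dir u0 i.+1).2].

Definition Qi (assign : point -> 'I_6) (t : point) (i : 'I_6) : seq point :=
  [seq p <- P | (dist p t <= r p) && (assign p == i)].

Definition dstar (q : 'I_6 -> option point) (s : point) : option nat :=
  \big[omin/None]_(i < 6)
     (match q i with Some x => osucc (dhop s x) | None => None end).

End Defs.

(* Main.v *)
Require Import Defs.
From HB Require Import structures.
From mathcomp Require Import all_boot all_order all_algebra.
From mathcomp Require Import boolp reals ring lra.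
Import Order.TTheory GRing.Theory Num.Theory.
Local Open Scope ring_scope.

Section G.
Variable R : realType.

Lemma alg4 (a b c d : R) : 0 <= a -> 0 <= b -> 0 <= c -> 0 <= d ->
  (a-c)^+2 + (b-d)^+2 + (a-c)*(b-d) <= a^+2 + b^+2 + a*b \/
  (a-c)^+2 + (b-d)^+2 + (a-c)*(b-d) <= c^+2 + d^+2 + c*d.
Proof.
move=> ha hb hc hd.
set A := a^+2 + b^+2 + a*b; set C := c^+2 + d^+2 + c*d.
set Y := a*c + b*d + (a*d + b*c)/2.
have hD : (a-c)^+2 + (b-d)^+2 + (a-c)*(b-d) = A + C - 2 * Y by rewrite /A /C /Y; field.
have p1 : 0 <= a*c by exact: mulr_ge0.
have p2 : 0 <= a*a by exact: mulr_ge0.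
have p3 : 0 <= b*d by exact: mulr_ge0.
have p4 : 0 <= b*b by exact: mulr_ge0.
have p5 : 0 <= c*d by exact: mulr_ge0.
have p6 : 0 <= a*b by exact: mulr_ge0.
have p7 : 0 <= c*c by exact: mulr_ge0.
have p8 : 0 <= d*d by exact: mulr_ge0.
have p9 : 0 <= a*d by exact: mulr_ge0.
have p10 : 0 <= b*c by exact: mulr_ge0.
have hY : 0 <= Y by rewrite /Y; lra.
have h4 : 4 * Y^+2 - A * C = 3 * (A * C - (a*d - b*c)^+2) by rewrite /A /C /Y; field.
have hAC : (a*d - b*c)^+2 <= A * C.
  have e : A * C - (a*d - b*c)^+2 = a*c*(a*c) + a*a*(c*d) + b*d*(b*d) + b*b*(c*d) + a*b*(c*c) + a*b*(d*d) + 3*(a*b*(c*d)) by rewrite /A /C; ring.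
  rewrite -subr_ge0 e.
  have q1 : 0 <= a*a*(c*d) by exact: mulr_ge0.
  have q2 : 0 <= b*b*(c*d) by exact: mulr_ge0.
  have q3 : 0 <= a*b*(c*c) by exact: mulr_ge0.
  have q4 : 0 <= a*b*(d*d) by exact: mulr_ge0.
  have q5 : 0 <= a*b*(c*d) by exact: mulr_ge0.
  have q6 : 0 <= a*c*(a*c) by exact: mulr_ge0.
  have q7 : 0 <= b*d*(b*d) by exact: mulr_ge0.
  lra.
have hA : 0 <= A by rewrite /A; lra.
have hC : 0 <= C by rewrite /C; lra.
have hAC2 : A * C <= 4 * Y^+2 by lra.
rewrite hD.
have [le|le] := lerP C A.
  left.
  have : C ^+2 <= 4 * Y^+2 by nra.
  nra.
right.
have : A ^+2 <= 4 * Y^+2 by nra.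
nra.
Qed.

Lemma rot60_norm (w : point R) :
  (rot60 w).1 ^+ 2 + (rot60 w).2 ^+ 2 = w.1 ^+ 2 + w.2 ^+ 2.
Proof.
rewrite /rot60 /=; have h : Num.sqrt 3 ^+ 2 = 3 :> R by rewrite sqr_sqrtr.
move: (Num.sqrt 3) h => s h.
apply/eqP; rewrite -subr_eq0; apply/eqP.
transitivity ((s ^+ 2 - 3) * (w.1 ^+ 2 + w.2 ^+ 2) / 4); first by field.
by rewrite h subrr !mul0r.
Qed.

Lemma rot60_dot (w : point R) :
  w.1 * (rot60 w).1 + w.2 * (rot60 w).2 = (w.1 ^+ 2 + w.2 ^+ 2) / 2.
Proof. by rewrite /rot60 /=; field. Qed.

Lemma cone_dir_norm u0 k : u0.1 ^+ 2 + u0.2 ^+ 2 = 1 ->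
  (cone_dir u0 k).1 ^+ 2 + (cone_dir u0 k).2 ^+ 2 = 1 :> R.
Proof.
move=> h; elim: k => [|k IH] //=; by rewrite rot60_norm.
Qed.

Lemma quad (u v : point R) (al be : R) :
  u.1 ^+ 2 + u.2 ^+ 2 = 1 -> v.1 ^+ 2 + v.2 ^+ 2 = 1 ->
  u.1 * v.1 + u.2 * v.2 = 1 / 2 ->
  (al * u.1 + be * v.1) ^+ 2 + (al * u.2 + be * v.2) ^+ 2 = al^+2 + be^+2 + al*be.
Proof.
move=> hu hv huv.
transitivity (al^+2 * (u.1 ^+ 2 + u.2 ^+ 2) + be^+2 * (v.1 ^+ 2 + v.2 ^+ 2)
   + 2 * al * be * (u.1 * v.1 + u.2 * v.2)); first by ring.
by rewrite hu hv huv; field.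
Qed.

Lemma cone_close u0 (i : 'I_6) (t y z : point R) :
  u0.1 ^+ 2 + u0.2 ^+ 2 = 1 -> in_cone u0 i t y -> in_cone u0 i t z ->
  dist y z <= dist y t \/ dist y z <= dist z t.
Proof.
move=> hu0 [a [b [ha hb ey1 ey2]]] [c [d [hc hd ez1 ez2]]].
set u := cone_dir u0 i in ey1 ey2 ez1 ez2.
have ev : cone_dir u0 i.+1 = rot60 u by rewrite /u /cone_dir iterS.
rewrite {}ev in ey1 ey2 ez1 ez2.
have hu : u.1 ^+ 2 + u.2 ^+ 2 = 1 by exact: cone_dir_norm.
have hv : (rot60 u).1 ^+ 2 + (rot60 u).2 ^+ 2 = 1 by rewrite rot60_norm.
have huv : u.1 * (rot60 u).1 + u.2 * (rot60 u).2 = 1 / 2 by rewrite rot60_dot hu.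
move: (rot60 u) hv huv ey1 ey2 ez1 ez2 => v hv huv ey1 ey2 ez1 ez2.
have eyz1 : y.1 - z.1 = (a - c) * u.1 + (b - d) * v.1.
  have -> : y.1 - z.1 = (y.1 - t.1) - (z.1 - t.1) by ring.
  rewrite ey1 ez1; ring.
have eyz2 : y.2 - z.2 = (a - c) * u.2 + (b - d) * v.2.
  have -> : y.2 - z.2 = (y.2 - t.2) - (z.2 - t.2) by ring.
  rewrite ey2 ez2; ring.
rewrite /dist eyz1 eyz2 ey1 ey2 ez1 ez2 !quad //.
case: (@alg4 a b c d ha hb hc hd) => h; [left|right]; by rewrite ler_sqrt // ?addr_ge0 ?sqr_ge0 ?mulr_ge0.
Qed.
End G.

Lemma ole_trans a b c : ole a b -> ole b c -> ole a c.
Proof. case: a b c => [x|] [y|] [z|] //= h1 h2; exact: leq_trans h1 h2. Qed.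

Lemma ole_refl a : ole a a.
Proof. case: a => [x|] //=; exact: leqnn. Qed.

Lemma ole_omin c a b : ole c a -> ole c b -> ole c (omin a b).
Proof. case: a b c => [x|] [y|] [z|] //= h1 h2; by rewrite leq_min h1 h2. Qed.

Lemma omin_le_l a b : ole (omin a b) a.
Proof. case: a b => [x|] [y|] //=; by rewrite ?geq_minl ?leqnn. Qed.

Lemma omin_le_r a b : ole (omin a b) b.
Proof. case: a b => [x|] [y|] //=; by rewrite ?geq_minr ?leqnn. Qed.

Lemma big_omin_glb (I : Type) (rr : seq I) (Pr : pred I) F c :
  (forall i, Pr i -> ole c (F i)) -> ole c (\big[omin/None]_(i <- rr | Pr i) F i).
Proof. move=> h; elim/big_ind: _ => //; exact: ole_omin. Qed.

Lemma big_omin_le (I : eqType) (rr : seq I) (Pr : pred I) F x :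
  x \in rr -> Pr x -> ole (\big[omin/None]_(i <- rr | Pr i) F i) (F x).
Proof.
elim: rr => // y rr IH; rewrite inE big_cons => /orP [/eqP <-|hx] hp.
  by rewrite hp; apply: omin_le_l.
case: ifP => _; last exact: IH.
exact: ole_trans (omin_le_r _ _) (IH hx hp).
Qed.

Lemma big_omin_mem (I : eqType) (rr : seq I) (Pr : pred I) F :
  \big[omin/None]_(i <- rr | Pr i) F i = None \/
  exists x, [/\ x \in rr, Pr x & \big[omin/None]_(i <- rr | Pr i) F i = F x].
Proof.
elim: rr => [|y rr IH]; first by left; rewrite big_nil.
rewrite big_cons; case: ifP => hp; last first.
  case: IH => [->|[x [h1 h2 h3]]]; first by left.
  by right; exists x; rewrite inE h1 orbT.
case: IH => [->|[x [h1 h2 ->]]].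
  by right; exists y; rewrite inE eqxx hp; case: (F y).
case Fy: (F y) => [m|]; case Fx: (F x) => [n|] /=.
- case: (leqP m n) => hmn.
  + by right; exists y; rewrite inE eqxx Fy hp .
  + by right; exists x; rewrite inE h1 orbT Fx h2 .
- by right; exists y; rewrite inE eqxx Fy hp.
- by right; exists x; rewrite inE h1 orbT Fx h2.
- by left.
Qed.

Section D.
Variable R : realType.
Variables (P : seq (point R)) (r : point R -> R).

Lemma dhop_walk p x k : dhop P r p x = Some k -> walk P r k p x.
Proof.
rewrite /dhop; case: pselect => // H [<-]; case: ex_minnP => m /asboolP //.
Qed.

Lemma dhop_min p x k : walk P r k p x -> exists k', dhop P r p x = Some k' /\ (k' <= k)%N.
Proof.
move=> hw; rewrite /dhop; case: pselect => [H|]; last by case; exists k.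
exists (ex_minn (walk_ex_bool H)); split => //.
case: ex_minnP => m _ hm; apply: hm; exact/asboolP.
Qed.
End D.

Theorem mainTheorem6 (R : realType) (P : seq (point R)) (r : point R -> R)
  (t : point R) (u0 : point R)
  (assign : point R -> 'I_6) (q : 'I_6 -> option (point R)) (s : point R) :
  (forall p, p \in P -> 0 < r p) ->
  u0.1 ^+ 2 + u0.2 ^+ 2 = 1 ->
  (forall p, p \in P -> dist p t <= r p -> in_cone u0 (assign p) t p) ->
  (forall i, match q i with
             | None => Qi P r assign t i = [::]
             | Some x => x \in Qi P r assign t i /\
                         (forall y, y \in Qi P r assign t i -> r x <= r y)
             end) ->
  s \in P ->
  can_reach P r s t ->
  ole (dhop_t P r s t) (dstar P r q s) /\
  ole (dstar P r q s) (osucc (dhop_t P r s t)).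
Proof.
move=> hr hu0 hcone hq hs hreach; split.
  rewrite /dstar; apply: big_omin_glb => i _.
  move: (hq i); case: (q i) => [x [hx _]|_]; last by case: (dhop_t P r s t).
  move: hx; rewrite /Qi mem_filter => /andP [/andP [hxt _] hxP].
  rewrite /dhop_t; exact: big_omin_le.
move: hreach; rewrite /can_reach /dhop_t.
case: (@big_omin_mem _ P (fun q => dist q t <= r q) (fun q => osucc (dhop P r s q))) => [->//|].
move=> [q' [hq'P hq't]] ->.
case hd: (dhop P r s q') => [m|] //= _.
have hw := @dhop_walk R P r s q' m hd.
set i := assign q'.
have hq'Q : q' \in Qi P r assign t i by rewrite /Qi mem_filter hq't eqxx hq'P.
have := hq i; case Eqi: (q i) => [x|]; last by move=> hnil; rewrite hnil in hq'Q.
move=> [hxQ hmin].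
have hrx := hmin _ hq'Q.
move: (hxQ); rewrite /Qi mem_filter => /andP [/andP [hxt /eqP hax] hxP].
have c1 := hcone _ hq'P hq't.
have c2 := hcone _ hxP hxt; rewrite hax in c2.
have harc : Defs.arc P r q' x.
  rewrite /Defs.arc hq'P hxP /=.
  case: (@cone_close R u0 i t q' x hu0 c1 c2) => h; first exact: le_trans h hq't.
  exact: le_trans h (le_trans hxt hrx).
have hw' : walk P r m.+1 s x.
  case: hw => sq [h1 h2 h3 h4]; exists (rcons sq x); split => //.
  - by rewrite size_rcons h2.
  - by rewrite rcons_path h3 h4 harc.
  - by rewrite last_rcons.
case: (@dhop_min R P r s x m.+1 hw') => k [hk hkm].
change (ole (dstar P r q s) (Some m.+2)).
apply: (@ole_trans _ (Some k.+1)); last by rewrite /= ltnS.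
rewrite /dstar.
have := @big_omin_le _ (index_enum 'I_6) (fun _ => true)
  (fun i => match q i with Some x => osucc (dhop P r s x) | None => None end) i (mem_index_enum i) erefl.
rewrite Eqi hk => h; exact: h.
Qed.
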